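(* Let $G=(V,E)$ be a graph, let $r\ge1$ be an integer, and let $k=\mathrm{adm}_r(G)$. If $\sigma$ is a total order on $V$ such that $\mathrm{est}_r(u,G_\sigma)\le k$ for all $u\in V$, then for every $u\in V$, \[ \sum_{v\in \mathrm{reach}_r(u,G_\sigma)} (k-1)^{r-d_v} \le k\cdot (k-1)^{r-1}, \] where $d_v=d_v(u,G_\sigma)$.
   Context: For a graph $G$ and a total order $\sigma$ of $V$, a $u$–$v$ path $P$ with $v\ne u$ is $\ell$-qualifying if it has length at most $\ell$, $u<_\sigma v$, and every vertex of $P$ other than $u,v$ precedes $u$ in $\sigma$. $\mathrm{reach}_r(u,G_\sigma)$ is the set of vertices $v$ for which an $r$-qualifying $u$–$v$ path exists, and $d_v(u,G_\sigma)$ is the minimum $i$ such that $v\in\mathrm{reach}_i(u,G_\sigma)$. An $\ell$-qualifying $u$–$v$ path is shortest if no $(\ell-1)$-qualifying $u$–$v$ path exists. The $r$-backconnectivity $\mathrm{bcon}_r(u,G_\sigma)$ is the maximum number of $r$-qualifying paths starting at $u$ that are pairwise vertex-disjoint apart from $u$; the estimated $r$-backconnectivity $\mathrm{est}_r(u,G_\sigma)$ is the maximum number of shortest $r$-qualifying paths starting at $u$ that are pairwise vertex-disjoint apart from $u$. The $r$-admissibility is $\mathrm{adm}_r(G)=\min_\sigma\max_{u}\mathrm{bcon}_r(u,G_\sigma)$ over all total orders $\sigma$ of $V$. *)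

(* Defs.v *)
(* Graph = symmetric irreflexive relation e on a finType T.
   A total order sigma on V is given by an injective rank function
   rk : T -> nat (x <_sigma y  iff  rk x < rk y). *)
From Stdlib Require Import ClassicalEpsilon.
From mathcomp Require Import all_boot.
Set Implicit Arguments. Unset Strict Implicit. Unset Printing Implicit Defensive.

Definition asbool (P : Prop) : bool :=
  if excluded_middle_informative P then true else false.

Section Adm.
Variable T : finType.
Variable e : rel T.
Variable rk : T -> nat.

(* p = [x1; ...; xl] encodes the path u = x0, x1, ..., xl = v of length l
   = size p.  It is l-qualifying: length <= l, simple, edges of e,
   v <> u, u <_sigma v, and every interior vertex x1..x_{l-1} precedes u. *)
Definition qual (l : nat) (u v : T) (p : seq T) : bool :=
  [&& path e u p, last u p == v, uniq (u :: p), size p <= l,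
      v != u, rk u < rk v &
      all (fun x => rk x < rk u) (behead (belast u p))].

Definition squal (l : nat) (u v : T) (p : seq T) : Prop :=
  qual l u v p /\ ~ (exists q, qual (size p).-1 u v q).

Definition reach (l : nat) (u : T) : {set T} :=
  [set v | asbool (exists p, qual l u v p)].

(* d_v(u) = min i with v \in reach_i(u); qualifying paths are simple so
   i ranges over 0..#|T| without loss (value #|T| if v is unreachable). *)
Definition dv (u v : T) : nat :=
  \big[minn/#|T|]_(i < #|T|.+1 | v \in reach i u) i.

(* pairwise vertex-disjoint apart from u (p lists the vertices other than u) *)
Definition disj_family (ps : seq (seq T)) : bool :=
  pairwise (fun p q : seq T => ~~ has (fun x => x \in q) p) ps.

Definition has_family (Q : T -> seq T -> Prop) (u : T) (m : nat) : Prop :=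
  exists ps : seq (seq T), size ps = m /\
    (forall p, p \in ps -> Q (last u p) p) /\ disj_family ps.

(* maximum (the number is at most #|T|, since the paths are nonempty
   and disjoint) *)
Definition bcon (r : nat) (u : T) : nat :=
  \max_(m < #|T|.+1 | asbool (has_family (fun v p => qual r u v p) u m)) m.

Definition est (r : nat) (u : T) : nat :=
  \max_(m < #|T|.+1 | asbool (has_family (fun v p => squal r u v p) u m)) m.
End Adm.

(* adm_r(G) = min over all total orders sigma of V of max_u bcon_r(u, G_sigma);
   total orders on V correspond exactly to bijections (rank functions)
   V -> {0..|V|-1}. *)
Definition adm (T : finType) (e : rel T) (r : nat) : nat :=
  \big[minn/#|T|]_(s : {ffun T -> 'I_#|T|} | injectiveb s)
     \max_(u : T) bcon e (fun x => nat_of_ord (s x)) r u.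

(* Main.v *)
Require Import Defs.
From Stdlib Require Import Classical ClassicalEpsilon.
From mathcomp Require Import all_boot zify.
Set Implicit Arguments. Unset Strict Implicit. Unset Printing Implicit Defensive.

Section MengerS.
Variable T : finType.

Definition edg (E : {set T * T}) : rel T := fun a b => (a, b) \in E.

Definition walk (E : {set T*T}) (A B : {set T}) (p : seq T) : bool :=
  if p is a :: q then [&& a \in A, path (edg E) a q & last a q \in B] else false.

Definition sep E A B (X : {set T}) :=
  forall p, walk E A B p -> has (fun x => x \in X) p.

Definition dsj (p q : seq T) := ~~ has (fun x => x \in q) p.

Definition fam E A B n := exists I : {set T}, exists f : T -> seq T,
  n <= #|I| /\ (forall i, i \in I -> walk E A B (f i)) /\
  (forall i j, i \in I -> j \in I -> i != j -> dsj (f i) (f j)).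

Lemma prefix_first (R : rel T) (B : pred T) a q :
  path R a q -> has B (a :: q) ->
  exists q', [/\ path R a q', B (last a q'), {subset q' <= q} &
                 ~~ has B (belast a q')].
Proof.
elim: q a => [|b q IH] a /=.
  by move=> _; rewrite orbF => Ba; exists [::]; split.
move=> /andP [Rab pq] /orP [Ba|hq]; first by exists [::]; split.
case: (boolP (B a)) => Ba; first by exists [::]; split.
have [q' [p1 p2 p3 p4]] := IH b pq hq.
exists (b :: q'); split => /=.
- by rewrite Rab.
- done.
- by move=> z; rewrite !inE => /orP [->//|/p3 ->]; rewrite orbT.
- by rewrite negb_or Ba.
Qed.

Lemma suffix_last (R : rel T) (B : pred T) a q :
  path R a q -> has B (a :: q) ->
  exists a' q', [/\ B a', path R a' q', last a' q' = last a q,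
     {subset a' :: q' <= a :: q} & ~~ has B q'].
Proof.
elim: q a => [|b q IH] a /=.
  by move=> _; rewrite orbF => Ba; exists a, [::]; split.
move=> /andP [Rab pq] hB.
case: (boolP (B b || has B q)) => hb.
  have [a' [q' [p1 p2 p3 p4 p5]]] := IH b pq hb.
  exists a', q'; split => //.
  by move=> z /p4 H; rewrite inE H orbT.
move: hB; rewrite (negbTE hb) orbF => Ba.
by exists a, (b :: q); split => //=; rewrite Rab.
Qed.

Lemma prefix_at (R : rel T) (X : pred T) a q c :
  path R a q -> ~~ has X (belast a q) -> c \in a :: q ->
  exists q1, [/\ path R a q1, last a q1 = c &
    forall w, w \in a :: q1 -> X w -> c = last a q /\ w = c].
Proof.
elim: q a => [|d q IH] a /=.
  move=> _ _; rewrite inE => /eqP ->; exists [::]; split => //.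
  by move=> w; rewrite inE => /eqP ->.
move=> /andP [Rad pq]; rewrite negb_or => /andP [Xa hq].
rewrite inE; case: (boolP (c == a)) => [/eqP -> _|ca /= hc].
  exists [::]; split => // w; rewrite inE => /eqP -> Xa'.
  by rewrite Xa' in Xa.
have [q1 [p1 p2 p3]] := IH d pq hq hc.
exists (d :: q1); split => /=; first by rewrite Rad.
  done.
move=> w; rewrite inE => /orP [/eqP -> Xa'|hw Xw]; first by rewrite Xa' in Xa.
exact: p3.
Qed.

Lemma suffix_at (R : rel T) (Y : pred T) b t c :
  path R b t -> ~~ has Y t -> c \in b :: t ->
  exists t2, [/\ path R c t2, last c t2 = last b t &
    forall w, w \in c :: t2 -> Y w -> c = b /\ w = b].
Proof.
elim: t b => [|d t IH] b /=.
  move=> _ _; rewrite inE => /eqP ->; exists [::]; split => //.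
  by move=> w; rewrite inE => /eqP ->.
move=> /andP [Rbd pt]; rewrite negb_or => /andP [Yd ht].
rewrite inE; case: (boolP (c == b)) => [/eqP -> _|cb /= hc].
  exists (d :: t); split => //=; first by rewrite Rbd.
  move=> w; rewrite !inE => /orP [/eqP ->//|/orP [/eqP -> Yd'|hw Yw]].
    by rewrite Yd' in Yd.
  by have := hasPn ht w hw; rewrite Yw.
have [t2 [p1 p2 p3]] := IH d pt ht hc.
exists t2; split => // w hw Yw.
have [_ wd] := p3 w hw Yw.
by move: Yw; rewrite wd (negbTE Yd).
Qed.

Lemma path_noedge_x (E : {set T*T}) x y a q :
  path (edg E) a q -> x \notin belast a q -> path (edg (E :\ (x, y))) a q.
Proof.
elim: q a => [|b q IH] a //=.
move=> /andP [Eab pq]; rewrite inE negb_or => /andP [xa hx].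
rewrite IH // andbT /edg in_setD1; move: Eab; rewrite /edg => ->.
by rewrite andbT xpair_eqE negb_and eq_sym xa.
Qed.

Lemma path_noedge_y (E : {set T*T}) x y a q :
  path (edg E) a q -> y \notin q -> path (edg (E :\ (x, y))) a q.
Proof.
elim: q a => [|b q IH] a //=.
move=> /andP [Eab pq]; rewrite inE negb_or => /andP [yb hy].
rewrite IH // andbT /edg in_setD1; move: Eab; rewrite /edg => ->.
by rewrite andbT xpair_eqE negb_and [b == y]eq_sym yb orbT.
Qed.

Lemma sub_walk (E E' : {set T*T}) A B p :
  E' \subset E -> walk E' A B p -> walk E A B p.
Proof.
case: p => //= a q sE /and3P [-> pq ->]; rewrite andbT /=.
by apply: sub_path pq => z w; exact: (subsetP sE (z, w)).
Qed.

Lemma reindex_fam (I Z : {set T}) (f : T -> seq T) (h : seq T -> T)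
   (Pr : seq T -> Prop) :
  (forall i, i \in I -> Pr (f i) /\ h (f i) \in Z) ->
  (forall i j, i \in I -> j \in I -> i != j -> dsj (f i) (f j)) ->
  (forall p, Pr p -> h p \in p) ->
  #|Z| <= #|I| ->
  exists g : T -> seq T, (forall z, z \in Z -> Pr (g z) /\ h (g z) = z) /\
     (forall z z', z \in Z -> z' \in Z -> z != z' -> dsj (g z) (g z')).
Proof.
move=> hI hd hh cZ.
have hinj : {in I &, injective (fun i => h (f i))}.
  move=> i j iI jI /= hij; apply/eqP; apply/negP => /negP nij.
  have := hd i j iI jI nij; rewrite /dsj => /hasPn /(_ _ (hh _ (proj1 (hI i iI)))).
  by rewrite hij (hh _ (proj1 (hI j jI))).
have sub : [set h (f i) | i in I] \subset Z.
  by apply/subsetP => _ /imsetP [i iI ->]; exact: (proj2 (hI i iI)).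
have eqZ : [set h (f i) | i in I] = Z.
  by apply/eqP; rewrite eqEcard sub card_in_imset.
pose g z := f (odflt z [pick i in I | h (f i) == z]).
have gP z : z \in Z -> exists2 i, i \in I & g z = f i /\ h (f i) = z.
  rewrite -{1}eqZ => /imsetP [i0 i0I ->]; rewrite /g.
  case: pickP => [i /andP [iI /eqP hi]|/(_ i0)]; last by rewrite i0I eqxx.
  by exists i.
exists g; split.
  by move=> z /gP [i iI [-> <-]]; split => //; exact: (proj1 (hI i iI)).
move=> z z' /gP [i iI [-> hi]] /gP [j jI [-> hj]] zz'.
apply: hd => //; apply/negP => /eqP ij; move: zz'; by rewrite -hi -hj ij eqxx.
Qed.

Definition olast (X : {set T}) p :=
  if p is a :: q then ~~ has (fun x => x \in X) (belast a q) else true.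
Definition ofirst (X : {set T}) p :=
  if p is a :: q then ~~ has (fun x => x \in X) q else true.

Lemma menger0 (A B : {set T}) n :
  (forall X, sep set0 A B X -> n <= #|X|) -> fam set0 A B n.
Proof.
move=> hs; exists (A :&: B), (fun i => [:: i]); split; last split.
- apply: hs => [[|a [|b q]]] //=.
    by rewrite inE orbF.
  by rewrite /edg inE andbF.
- by move=> i; rewrite inE /= => /andP[-> ->].
- by move=> i j _ _ ij; rewrite /dsj /= inE orbF.
Qed.

Lemma menger_aux m : forall (E : {set T*T}) (A B : {set T}) n, #|E| <= m ->
  (forall X, sep E A B X -> n <= #|X|) -> fam E A B n.
Proof.
elim: m => [|m IH] E A B n cE hsep.
  by move: cE; rewrite leqn0 => /eqP /cards0_eq E0; move: hsep; rewrite E0; exact: menger0.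
case: (set_0Vmem E) => [E0|[[x y] xyE]].
  by move: hsep; rewrite E0; exact: menger0.
set E' := E :\ (x, y).
have cE' : #|E'| <= m by move: cE; rewrite (cardsD1 (x, y) E) xyE.
have sE' : E' \subset E by apply: subsetDl.
case: (classic (forall X, sep E' A B X -> n <= #|X|)) => hc.
  have [I [f [c1 [c2 c3]]]] := IH E' A B n cE' hc.
  exists I, f; split => //; split => // i iI; apply: sub_walk sE' _; exact: c2.
have [S hS] := not_all_ex_not _ _ hc.
have [sS nS] := imply_to_and _ _ hS.
have cS : #|S| < n by rewrite ltnNge; apply/negP.
set X1 := x |: S; set Y1 := y |: S.
have SX1 : {subset S <= X1} by move=> z zS; rewrite /X1 in_setU1 zS orbT.
have SY1 : {subset S <= Y1} by move=> z zS; rewrite /Y1 in_setU1 zS orbT.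
have sepX1 : sep E A B X1.
  move=> [|a q] //= /and3P [aA pq lB].
  case: (boolP (x \in belast a q)) => hx.
    change (has (fun z => z \in X1) (a :: q)).
    apply/hasP; exists x; first exact: mem_belast hx.
    by rewrite /X1 setU11.
  have hw : walk E' A B (a :: q) by rewrite /= aA lB andbT path_noedge_x.
  change (has (fun z => z \in X1) (a :: q)).
  by apply: sub_has (sS _ hw) => z; exact: SX1.
have sepY1 : sep E A B Y1.
  move=> [|a q] //= /and3P [aA pq lB].
  case: (boolP (y \in q)) => hy.
    change (has (fun z => z \in Y1) (a :: q)).
    by apply/hasP; exists y; [rewrite inE hy orbT | rewrite /Y1 setU11].
  have hw : walk E' A B (a :: q) by rewrite /= aA lB andbT path_noedge_y.
  change (has (fun z => z \in Y1) (a :: q)).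
  by apply: sub_has (sS _ hw) => z; exact: SY1.
have nX1 := hsep _ sepX1; have nY1 := hsep _ sepY1.
move: nX1 nY1; rewrite /X1 /Y1 !cardsU1 => nX1 nY1.
have xS : x \notin S.
  by apply/negP => xS; move: nX1; rewrite xS add0n leqNgt cS.
have yS : y \notin S.
  by apply/negP => yS; move: nY1; rewrite yS add0n leqNgt cS.
have cX1 : #|X1| = n by rewrite /X1 cardsU1 xS; move: nX1; rewrite xS /=; lia.
have cY1 : #|Y1| = n by rewrite /Y1 cardsU1 yS; move: nY1; rewrite yS /=; lia.
have hsub : forall (X : {set T}) s1 s2, has (fun z => z \in X) s1 -> {subset s1 <= s2} ->
    has (fun z => z \in X) s2.
  by move=> X s1 s2 /hasP [z z1 zX] s12; apply/hasP; exists z => //; exact: s12.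
have hP : forall X, sep E' A X1 X -> n <= #|X|.
  move=> X sX; apply: hsep => [[|a q]] // hw.
  have /and3P [aA pq lB] : [&& a \in A, path (edg E) a q & last a q \in B] := hw.
  have hX1 : has (fun z => z \in X1) (a :: q) := sepX1 _ hw.
  have [q' [p1 p2 p3 p4]] := prefix_first pq hX1.
  have hx : x \notin belast a q'.
    by apply: contra p4 => hx; apply/hasP; exists x; rewrite // /X1 setU11.
  have hw' : walk E' A X1 (a :: q') by rewrite /= aA p2 andbT path_noedge_x.
  apply: hsub (sX _ hw') _ => z; rewrite !inE => /orP [->//|/p3 ->]; by rewrite orbT.
have hQ : forall X, sep E' Y1 B X -> n <= #|X|.
  move=> X sX; apply: hsep => [[|a q]] // hw.
  have /and3P [aA pq lB] : [&& a \in A, path (edg E) a q & last a q \in B] := hw.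
  have hY1 : has (fun z => z \in Y1) (a :: q) := sepY1 _ hw.
  have [a' [q' [p1 p2 p3 p4 p5]]] := suffix_last pq hY1.
  have hy : y \notin q'.
    by apply: contra p5 => hy; apply/hasP; exists y; rewrite // /Y1 setU11.
  have hw' : walk E' Y1 B (a' :: q') by rewrite /= p1 p3 lB andbT path_noedge_y.
  exact: hsub (sX _ hw') p4.
have [I1 [f1 [c11 [c12 c13]]]] := IH E' A X1 n cE' hP.
have [I2 [f2 [c21 [c22 c23]]]] := IH E' Y1 B n cE' hQ.
have dsj_sub : forall p1 p2 q1 q2, dsj p1 q1 -> {subset p2 <= p1} -> {subset q2 <= q1} ->
    dsj p2 q2.
  move=> p1 p2 q1 q2 d s1 s2; apply/hasPn => z /s1 z1; apply/negP => /s2 z2.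
  by move/hasPn: d => /(_ z z1); rewrite z2.
have : forall i, exists p, i \in I1 ->
    [/\ walk E' A X1 p, olast X1 p & {subset p <= f1 i}].
  move=> i; case: (boolP (i \in I1)) => iI; last by exists [::].
  move: (c12 i iI); case: (f1 i) => [|a q] //= /and3P [aA pq lX].
  have hX : has (fun z => z \in X1) (a :: q).
    by apply/hasP; exists (last a q) => //; exact: mem_last.
  have [q' [p1 p2 p3 p4]] := prefix_first pq hX.
  exists (a :: q') => _; split => //=; first by rewrite aA p1 p2.
  by move=> z; rewrite !inE => /orP [->//|/p3 ->]; rewrite orbT.
case/fin_all_exists => g1 hg1.
have r1 : forall i, i \in I1 -> (walk E' A X1 (g1 i) /\ olast X1 (g1 i)) /\ last x (g1 i) \in X1.
  move=> i iI; have [w1 o1 _] := hg1 i iI; split => //.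
  by move: w1; case: (g1 i) => [|a q] //= /and3P [].
have r2 : forall i j, i \in I1 -> j \in I1 -> i != j -> dsj (g1 i) (g1 j).
  move=> i j iI jI ij; have [_ _ s1] := hg1 i iI; have [_ _ s2] := hg1 j jI.
  exact: dsj_sub (c13 i j iI jI ij) s1 s2.
have r3 : forall p, walk E' A X1 p /\ olast X1 p -> last x p \in p.
  move=> p [wp _]; case: p wp => [|a q] wp //; exact: (mem_last a q).
have [P [hPz dP]] := reindex_fam r1 r2 r3 (leq_trans (eq_leq cX1) c11).
have : forall i, exists p, i \in I2 ->
    [/\ walk E' Y1 B p, ofirst Y1 p & {subset p <= f2 i}].
  move=> i; case: (boolP (i \in I2)) => iI; last by exists [::].
  move: (c22 i iI); case: (f2 i) => [|a q] //= /and3P [aA pq lX].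
  have hY : has (fun z => z \in Y1) (a :: q) by rewrite /= aA.
  have [a' [q' [p1 p2 p3 p4 p5]]] := suffix_last pq hY.
  by exists (a' :: q') => _; split => //=; rewrite p1 p2 p3 lX.
case/fin_all_exists => g2 hg2.
have t1 : forall i, i \in I2 -> (walk E' Y1 B (g2 i) /\ ofirst Y1 (g2 i)) /\ head x (g2 i) \in Y1.
  move=> i iI; have [w1 o1 _] := hg2 i iI; split => //.
  by move: w1; case: (g2 i) => [|a q] //= /and3P [].
have t2 : forall i j, i \in I2 -> j \in I2 -> i != j -> dsj (g2 i) (g2 j).
  move=> i j iI jI ij; have [_ _ s1] := hg2 i iI; have [_ _ s2] := hg2 j jI.
  exact: dsj_sub (c23 i j iI jI ij) s1 s2.
have t3 : forall p, walk E' Y1 B p /\ ofirst Y1 p -> head x p \in p.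
  by move=> p [wp _]; case: p wp => [|a q] wp //; exact: mem_head.
have [Q [hQz dQ]] := reindex_fam t1 t2 t3 (leq_trans (eq_leq cY1) c21).
have cross : forall i j c, i \in X1 -> j \in Y1 -> c \in P i -> c \in Q j ->
    i = j /\ i \in S.
  move=> i j c iX jY cP cQ.
  have [[wP oP] lP] := hPz i iX; have [[wQ oQ] hQj] := hQz j jY.
  move: wP oP lP cP; case: (P i) => [|a q] //= /and3P[aA pq lX] oP lP cP.
  move: wQ oQ hQj cQ; case: (Q j) => [|b t] //= /and3P[bY pt lB] oQ hb cQ.
  have [q1 [u1 u2 u3]] := prefix_at pq oP cP.
  have [tt2 [v1 v2 v3]] := suffix_at pt oQ cQ.
  have hw : walk E' A B (a :: (q1 ++ tt2)).
    by rewrite /= aA cat_path u1 u2 v1 last_cat u2 v2 lB.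
  have := sS _ hw => /hasP [w]; rewrite -cat_cons mem_cat => /orP [wq|wt] wS.
    have [ci wc] := u3 w wq (SX1 _ wS).
    have cS' : c \in S by rewrite -wc.
    have cb : c = b.
      move: cQ; rewrite inE => /orP [/eqP //| ct].
      by move/hasPn: oQ => /(_ c ct); rewrite SY1.
    by split; rewrite -lP -ci // cb hb.
  have wct : w \in c :: tt2 by rewrite inE wt orbT.
  have [cb wb] := v3 w wct (SY1 _ wS).
  have cS' : c \in S by rewrite cb -wb.
  have ci : c = last a q.
    move: cP; rewrite lastI mem_rcons inE => /orP [/eqP //| cq].
    by move/hasPn: oP => /(_ c cq); rewrite SX1.
  by split; rewrite -lP -ci // cb hb.
have lift : forall a q, path (edg E') a q -> path (edg E) a q.
  by move=> a q; apply: sub_path => z w; exact: (subsetP sE' (z, w)).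
have dsjE : forall p q w, dsj p q -> w \in p -> w \in q -> False.
  by move=> p q w /hasPn d wp wq; move: (d w wp); rewrite wq.
pose star z := if z == x then y else z.
have starY : forall z, z \in X1 -> star z \in Y1.
  move=> z; rewrite /star /X1 in_setU1; case: eqP => [_ _|_ /= zS].
    by rewrite /Y1 setU11.
  exact: SY1.
pose W z := if z == x then P z ++ Q y else P z ++ behead (Q z).
have memW : forall z w, w \in W z -> w \in P z \/ w \in Q (star z).
  move=> z w; rewrite /W /star; case: (z == x); rewrite mem_cat => /orP [->|h]; auto.
  right; exact: mem_behead h.
exists X1, W; split; first by rewrite cX1.
split.
  move=> z zX; have [[wP oP] lP] := hPz z zX.
  have [[wQ oQ] hQ'] := hQz (star z) (starY z zX).
  rewrite /W; move: hQ' wQ; rewrite /star.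
  case: (eqVneq z x) => [zx|zx].
    move: wP lP; case: (P z) => [|a q] //= /and3P [aA pq lX] lP.
    case: (Q y) => [|b t] //= hb /and3P [bY pt lB]; subst b.
    rewrite aA cat_path lift //= last_cat /= lP zx.
    by rewrite /edg xyE lift //= lB.
  move: wP lP; case: (P z) => [|a q] //= /and3P [aA pq lX] lP.
  case: (Q z) => [|b t] //= hb /and3P [bY pt lB]; subst b.
  by rewrite aA cat_path lift //= last_cat lP lift.
move=> z z' zX z'X zz'; apply/hasPn => w wz; apply/negP => wz'.
have [sz sz'] := (starY z zX, starY z' z'X).
case: (memW z w wz) => [h1|h1]; case: (memW z' w wz') => [h2|h2].
- exact: dsjE (dP z z' zX z'X zz') h1 h2.
- have [e1 e2] := cross z (star z') w zX sz' h1 h2.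
  move: e1; rewrite /star; case: eqP => [_ e1|_ e1].
    by move: e2 yS; rewrite e1 => ->.
  by move: zz'; rewrite e1 eqxx.
- have [e1 e2] := cross z' (star z) w z'X sz h2 h1.
  move: e1; rewrite /star; case: eqP => [_ e1|_ e1].
    by move: e2 yS; rewrite e1 => ->.
  by move: zz'; rewrite e1 eqxx.
- case: (eqVneq (star z) (star z')) => [e|ne]; last exact: dsjE (dQ _ _ sz sz' ne) h1 h2.
  move: e; rewrite /star; case: (eqVneq z x) => [zx|zx]; case: (eqVneq z' x) => [z'x|z'x] //.
  + by move: zz'; rewrite zx z'x eqxx.
  + move=> yz'; move: z'X; rewrite /X1 in_setU1 (negbTE z'x) /= -yz'.
    by rewrite (negbTE yS).
  + move=> zy; move: zX; rewrite /X1 in_setU1 (negbTE zx) /= zy.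
    by rewrite (negbTE yS).
  + by move=> e; move: zz'; rewrite e eqxx.
Qed.

Theorem menger (E : {set T*T}) (A B : {set T}) n :
  (forall X, sep E A B X -> n <= #|X|) -> fam E A B n.
Proof. exact: menger_aux. Qed.
End MengerS.

Lemma asboolT (P : Prop) : P -> asbool P.
Proof. by rewrite /asbool; case: excluded_middle_informative. Qed.
Lemma asboolE (P : Prop) : asbool P -> P.
Proof. by rewrite /asbool; case: excluded_middle_informative. Qed.

Section BigMin.
Variable (I : eqType).
Lemma bigmin_le_seq (s : seq I) (P : pred I) (F : I -> nat) N0 j :
  j \in s -> P j -> \big[minn/N0]_(i <- s | P i) F i <= F j.
Proof.
elim: s => // x s IH; rewrite inE big_cons => /orP [/eqP <-|js] Pj.
  by rewrite Pj geq_minl.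
case: (P x); last exact: IH.
exact: leq_trans (geq_minr _ _) (IH js Pj).
Qed.
Lemma bigmin_geq_seq (s : seq I) (P : pred I) (F : I -> nat) N0 m :
  m <= N0 -> (forall i, i \in s -> P i -> m <= F i) ->
  m <= \big[minn/N0]_(i <- s | P i) F i.
Proof.
move=> mN; elim: s => [|x s IH] h; first by rewrite big_nil.
rewrite big_cons; have IH' : m <= \big[minn/N0]_(i <- s | P i) F i.
  by apply: IH => i iS; apply: h; rewrite inE iS orbT.
case Px: (P x) => //; rewrite leq_min IH' andbT; apply: h => //; exact: mem_head.
Qed.
Lemma bigmin_att_seq (s : seq I) (P : pred I) (F : I -> nat) N0 :
  \big[minn/N0]_(i <- s | P i) F i < N0 ->
  exists2 i, i \in s & P i /\ \big[minn/N0]_(i <- s | P i) F i = F i.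
Proof.
elim: s => [|x s IH]; first by rewrite big_nil ltnn.
rewrite big_cons; case Px: (P x) => h.
  case: (leqP (F x) (\big[minn/N0]_(i <- s | P i) F i)) => hx.
    by exists x; [exact: mem_head | split => //; apply/minn_idPl].
  have e1 : minn (F x) (\big[minn/N0]_(i <- s | P i) F i) =
      \big[minn/N0]_(i <- s | P i) F i by apply/minn_idPr; exact: ltnW.
  move: h; rewrite e1 => /IH [i iS [Pi ei]].
  by exists i; [rewrite inE iS orbT | split => //; rewrite e1].
have [i iS [Pi ei]] := IH h.
by exists i; [rewrite inE iS orbT | ].
Qed.
End BigMin.

Lemma all_bb (T : eqType) (P : pred T) x s : all P s -> all P (behead (belast x s)).
Proof.
case: s => //= d l /andP [Pd Pl]; apply/allP => z /mem_belast; rewrite inE.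
by case/orP => [/eqP -> //|/(allP Pl)].
Qed.

Section Lay.
Variables (T : finType) (e : rel T) (rk : T -> nat) (r : nat) (u : T).
Hypotheses (esym : symmetric e) (rkinj : injective rk).

Definition goodw (x : T) (q : seq T) : bool :=
  [&& path e u q, last u q == x & all (fun y => rk y < rk u) (behead (belast u q))].

Definition lay (x : T) : nat :=
  \big[minn/r.+1]_(i < r.+1 | asbool (exists q, size q = i /\ goodw x q)) i.

Lemma lay_le x q : goodw x q -> size q <= r -> lay x <= size q.
Proof.
move=> g sq; have sq' : size q < r.+1 by [].
have := @bigmin_le_seq _ (index_enum 'I_r.+1)
   (fun i : 'I_r.+1 => asbool (exists q, size q = i /\ goodw x q))
   (fun i => nat_of_ord i) r.+1 (Ordinal sq') (mem_index_enum _).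
by apply; apply: asboolT; exists q.
Qed.

Lemma lay_ex x : lay x <= r -> exists q, size q = lay x /\ goodw x q.
Proof.
move=> h; have := @bigmin_att_seq _ (index_enum 'I_r.+1)
   (fun i : 'I_r.+1 => asbool (exists q, size q = i /\ goodw x q))
   (fun i => nat_of_ord i) r.+1.
case; first exact: h.
move=> i _ [/asboolE [q [sq gq]] ei]; exists q; split => //.
by rewrite /lay ei.
Qed.

Lemma lay_u : lay u = 0.
Proof. by apply/eqP; rewrite -leqn0; apply: (@lay_le u [::]) => //; rewrite /goodw /= eqxx. Qed.

Lemma lay0 x : lay x = 0 -> x = u.
Proof.
move=> h; have hx : lay x <= r by rewrite h.
have [q [sq gq]] := lay_ex hx.
by move: sq gq; rewrite h; case: q => //= _ /and3P [_ /eqP].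
Qed.

Lemma goodw_cat y q1 q2 : goodw y q1 -> rk y < rk u -> path e y q2 ->
  all (fun z => rk z < rk u) (behead (belast y q2)) -> goodw (last y q2) (q1 ++ q2).
Proof.
case/and3P => p1 /eqP l1 a1 ry p2 a2.
rewrite /goodw cat_path p1 l1 p2 last_cat l1 eqxx /= belast_cat l1.
case: q1 p1 l1 a1 => [|c q1] /= p1 l1 a1; first by rewrite -l1 ltnn in ry.
rewrite all_cat a1 /=; case: q2 p2 a2 => //= d q2 _ a2.
by rewrite ry.
Qed.

Lemma goodw_ext c q : lay c <= r -> rk c <= rk u -> path e c q ->
  all (fun z => rk z < rk u) (behead (belast c q)) ->
  exists q2, goodw (last c q) q2 /\ size q2 = lay c + size q.
Proof.
move=> lc; rewrite leq_eqVlt => /orP [/eqP /rkinj ->|cu] pq aq.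
  by exists q; rewrite lay_u /goodw pq eqxx aq.
have [qc [sq gq]] := lay_ex lc.
by exists (qc ++ q); rewrite goodw_cat // size_cat sq.
Qed.

Definition De (a b : T) : bool :=
  [&& e a b, rk a <= rk u, lay b <= r & lay b == (lay a).+1].

Lemma lay_pred z : z != u -> lay z <= r -> exists y, De y z.
Proof.
move=> zu lz; have [q [sq /and3P [pq /eqP lq aq]]] := lay_ex lz.
case/lastP: q sq pq lq aq => [|q' z'] sq pq lq aq.
  by move: zu; rewrite -lq /= eqxx.
rewrite last_rcons in lq; subst z'.
move: pq; rewrite rcons_path => /andP [pq' eyz].
move: aq; rewrite belast_rcons /= => aq.
set y := last u q'.
have gy : goodw y q' by rewrite /goodw pq' eqxx all_bb.
have ry : rk y <= rk u.
  have : y \in u :: q' := mem_last u q'.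
  by rewrite inE => /orP [/eqP ->//|/(allP aq) /ltnW].
have sq' : size q' = (lay z).-1 by rewrite -sq size_rcons.
have lz0 : 0 < lay z by rewrite lt0n; apply/eqP => /lay0 zu'; rewrite zu' eqxx in zu.
have ly : lay y <= (lay z).-1 by rewrite -sq'; apply: lay_le gy _; rewrite sq'; lia.
have lyr : lay y <= r by lia.
have pyz : path e y [:: z] by rewrite /= eyz.
have [q2 [g2 s2]] := @goodw_ext y [:: z] lyr ry pyz isT.
have s2r : size q2 <= r by rewrite s2 /=; lia.
have := lay_le g2 s2r; rewrite s2 /= => h.
exists y; rewrite /De eyz ry lz /=; apply/eqP; lia.
Qed.

Lemma De_lay a b : De a b -> lay b = (lay a).+1.
Proof. by case/and4P => _ _ _ /eqP. Qed.

Lemma lay_conn n z : lay z = n -> n <= r -> connect De u z.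
Proof.
elim: n z => [|n IH] z lz hn; first by rewrite (lay0 lz) connect0.
have zu : z != u by apply/eqP => zu; move: lz; rewrite zu lay_u.
have lzr : lay z <= r by rewrite lz.
have [y Dyz] := lay_pred zu lzr.
have ly : lay y = n by move: (De_lay Dyz); rewrite lz => -[].
apply: connect_trans (IH y ly (ltnW hn)) (connect1 Dyz).
Qed.

Lemma De_path_lay a p : path De a p -> lay (last a p) = lay a + size p.
Proof.
elim: p a => [|b p IH] a /=; first by rewrite addn0.
by case/andP => /De_lay h /IH ->; rewrite h addnS addSn.
Qed.

Lemma De_path_gt a p : path De a p -> all (fun w => lay a < lay w) p.
Proof.
move=> h; have h' : path (fun x y => lay x < lay y) a p.
  by apply: sub_path h => x y /De_lay ->.
by apply: order_path_min h' => y x z; exact: ltn_trans.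
Qed.

Lemma De_path_le a p : path De a p -> all (fun w => lay w <= r) p.
Proof.
elim: p a => //= b p IH a /andP [/and4P [_ _ lb _] pp]; by rewrite lb (IH b pp).
Qed.

Lemma De_path_uniq a p : path De a p -> uniq (a :: p).
Proof.
move=> h; apply: (@map_uniq _ _ lay).
have h' : path ltn (lay a) (map lay p).
  by rewrite path_map; apply: sub_path h => x y /De_lay hxy; rewrite /relpre /= hxy.
by apply: (sorted_uniq ltn_trans ltnn); exact: h'.
Qed.

Lemma De_path_e a p : path De a p -> path e a p.
Proof. by apply: sub_path => x y /and4P []. Qed.

Lemma path_conn (R : rel T) a q z : path R a q -> z \in a :: q -> connect R z (last a q).
Proof.
elim: q a z => [|b q IH] a z /=.
  by move=> _; rewrite inE => /eqP ->; exact: connect0.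
case/andP => Rab pq; rewrite inE => /orP [/eqP ->|zq].
  exact: (@connect_trans _ R b a _ (connect1 Rab) (IH b b pq (mem_head _ _))).
exact: IH.
Qed.

Lemma conn_path c v : connect De c v -> c != v ->
  exists a q, [/\ De c a, path De a q & last a q = v].
Proof.
case/connectP => [[|a q]] /=; first by move=> _ ->; rewrite eqxx.
by case/andP => Dca pq -> _; exists a, q.
Qed.

Definition rDe (a b : T) := De b a.

Lemma back_aux c : rk c < rk u -> lay c <= r -> forall n z, lay z <= n ->
  rk z <= rk c -> lay z <= lay c ->
  exists p, [/\ path rDe z p, p != [::], rk c < rk (last z p) &
                all (fun w => rk w < rk c) (behead (belast z p))].
Proof.
move=> cu lc; elim=> [|n IH] z lzn rzc lzc.
  move: lzn; rewrite leqn0 => /eqP /lay0 zu; move: rzc; rewrite zu leqNgt cu //.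
have zu : z != u by apply/eqP => zu; move: rzc; rewrite zu leqNgt cu.
have lzr : lay z <= r by exact: leq_trans lzc lc.
have [y Dyz] := lay_pred zu lzr.
have lyz := De_lay Dyz.
case: (ltnP (rk c) (rk y)) => ryc.
  by exists [:: y]; split => //=; rewrite /rDe Dyz.
have yc : y != c by apply/eqP => yc; move: lyz; rewrite yc; lia.
have ryc' : rk y < rk c.
  by rewrite ltn_neqAle ryc andbT; apply: contra yc => /eqP /rkinj ->.
have ly1 : lay y <= n by lia.
have ly2 : lay y <= lay c by lia.
have [p [p1 p2 p3 p4]] := IH y ly1 ryc ly2.
exists (y :: p); split => //=.
  by rewrite /rDe Dyz.
by case: p p1 p2 p3 p4 => //= d p _ _ _ a4; rewrite ryc'.
Qed.

Lemma qual_goodw l v p : qual e rk l u v p ->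
  [/\ goodw v p, size p <= l, v != u, rk u < rk v & uniq (u :: p)].
Proof.
case/and4P => h1 h2 h3 /and4P [h4 h5 h6 h7].
by split => //; rewrite /goodw h1 h2 h7.
Qed.

Lemma mem_bb (x y : T) s : y \in behead (belast x s) -> y \in s.
Proof. by case: s => //= d l /mem_belast. Qed.

Lemma goodw_qual v q : goodw v q -> rk u < rk v ->
  exists p, qual e rk (size q) u v p.
Proof.
case/and3P => pq /eqP lq aq uv.
have vu : v != u by apply/eqP => vu; move: uv; rewrite vu ltnn.
have [p' [h1 h2 h3 h4]] : exists p', [/\ path e u p', uniq (u :: p'),
    {subset p' <= q} & last u p' = last u q].
  by case/shortenP: pq => p' ? ? ?; exists p'.
exists p'; rewrite /qual h1 h4 lq eqxx h2 vu uv /=.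
rewrite (uniq_leq_size (proj2 (andP h2)) h3) /=.
apply/allP => x xb.
have xp : x \in p' := mem_bb xb.
have xu : x != u by apply: contraTneq h2 => <-; rewrite /= xp.
have xv : x != v.
  move: h2; rewrite lastI rcons_uniq h4 lq => /andP [vb _].
  apply: contraNneq vb => <-; move: xb; case: (p') => //= d l; rewrite inE => ->.
  by rewrite orbT.
have xq := h3 x xp.
have : x \in u :: q by rewrite inE xq orbT.
rewrite lastI mem_rcons inE lq (negbTE xv) /= => xbq.
move/allP: aq; apply; case: q xq xbq {h3 h4 lq pq} => //= d l _.
by rewrite inE (negbTE xu).
Qed.

Lemma reach_lay v : v \in reach e rk r u ->
  [/\ rk u < rk v, v != u, lay v <= r & dv e rk u v = lay v].
Proof.
rewrite inE => /asboolE [p0 /qual_goodw [g0 s0 vu uv un]].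
have lv := leq_trans (lay_le g0 s0) s0.
split => //.
have lvT : lay v < #|T|.+1.
  apply: leq_ltn_trans (lay_le g0 s0) _.
  have h := max_card (mem (u :: p0)); move/card_uniqP: un => hu.
  by rewrite hu /= in h; apply: ltnW.
apply/eqP; rewrite eqn_leq; apply/andP; split.
  have := @bigmin_le_seq _ (index_enum 'I_#|T|.+1)
     (fun i : 'I_#|T|.+1 => v \in reach e rk i u)
     (fun i => nat_of_ord i) #|T| (Ordinal lvT) (mem_index_enum _).
  apply; rewrite inE /=; apply: asboolT.
  have [q [sq gq]] := lay_ex lv.
  by have [p hp] := goodw_qual gq uv; exists p; rewrite -sq.
apply: bigmin_geq_seq; first by rewrite -ltnS.
move=> i _; rewrite inE => /asboolE [p /qual_goodw [g s _ _ _]].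
case: (leqP r i) => ri; first exact: leq_trans lv ri.
exact: leq_trans (lay_le g (leq_trans s (ltnW ri))) s.
Qed.

Lemma pairwise_uniq (A : eqType) (R : rel A) (s : seq A) : uniq s ->
  (forall x y, x \in s -> y \in s -> x != y -> R x y) -> pairwise R s.
Proof.
elim: s => //= x s IH /andP [xs us] h; rewrite IH ?andbT.
- apply/allP => y ys; apply: h; rewrite ?inE ?eqxx ?ys ?orbT //.
  by apply: contraNneq xs => ->.
- by [].
- by move=> a b a1 b1; apply: h; rewrite inE ?a1 ?b1 orbT.
Qed.

Lemma fam_size (x0 : T) (ps : seq (seq T)) : all (fun p => p != [::]) ps ->
  pairwise (fun p q : seq T => ~~ has (fun x => x \in q) p) ps -> size ps <= #|T|.
Proof.
move=> ne pw; rewrite -(size_map (head x0)).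
suff un : uniq (map (head x0) ps).
  by move/card_uniqP: un => <-; apply: max_card.
elim: ps ne pw => //= p ps IH /andP [np ne] /andP [ap pw].
rewrite IH // andbT; apply/mapP => -[q qps hq].
have := allP ap q qps => /hasPn /(_ (head x0 p)).
have -> : head x0 p \in p by case: (p) np => //= a l _; exact: mem_head.
rewrite hq; case: (q) (allP ne q qps) => //= a l _ /(_ isT).
by rewrite mem_head.
Qed.

Lemma est_ge c (ps : seq (seq T)) :
  (forall p, p \in ps -> squal e rk r c (last c p) p) ->
  pairwise (fun p q : seq T => ~~ has (fun x => x \in q) p) ps ->
  size ps <= est e rk r c.
Proof.
move=> hq pw.
have ne : all (fun p => p != [::]) ps.
  apply/allP => p /hq [/and4P [_ _ _ /and4P [_ vc _ _]] _].
  by apply: contraNneq vc => ->; rewrite /= eqxx.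
have sT : size ps < #|T|.+1.
  by have := fam_size c ne pw.
rewrite /est; apply: (@leq_bigmax_cond _ _ (fun m : 'I_#|T|.+1 => nat_of_ord m) (Ordinal sT)).
apply: asboolT; exists ps; split => //.
Qed.

Lemma last_rev_belast (x : T) s : last (last x s) (rev (belast x s)) = x.
Proof.
have := congr1 (last x) (congr1 rev (lastI x s)).
by rewrite rev_rcons /= rev_cons last_rcons.
Qed.

Lemma mem_belast_split (x y : T) s : y \in belast x s -> y = x \/ y \in behead (belast x s).
Proof. by case: s => //= d l; rewrite inE => /orP [/eqP ->|]; [left|right]. Qed.

Lemma fwd_qual c a q : lay c <= r -> rk c <= rk u -> De c a -> path De a q ->
  rk c < rk (last a q) -> ~~ has (fun z => rk c < rk z) (belast a q) ->
  squal e rk r c (last a q) (a :: q) /\ all (fun w => lay c < lay w) (a :: q).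
Proof.
move=> lc cu Dca pq cw hb.
have pD : path De c (a :: q) by rewrite /= Dca.
have un := De_path_uniq pD.
have ll := De_path_lay pD; rewrite /= in ll.
have lw : lay (last a q) <= r.
  by have := allP (De_path_le pD) (last a q) (mem_last a q).
have gt := De_path_gt pD.
split => //.
have wc : last a q != c by apply/eqP => h; move: cw; rewrite h ltnn.
split.
  rewrite /qual (De_path_e pD) un wc cw.
  have -> : size (a :: q) <= r by move: lw; rewrite ll /=; lia.
  rewrite /= eqxx /=; apply/allP => x xb.
  have := hasPn hb x xb; rewrite -leqNgt leq_eqVlt => /orP [/eqP /rkinj xc|//].
  move: un; rewrite /= xc => /andP [ha _]; case/negP: ha.
  by rewrite -xc; exact: mem_belast xb.
case=> q' /and4P [p1 /eqP l1 _ /and4P [s1 _ _ a1]].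
have a1' : all (fun z => rk z < rk u) (behead (belast c q')).
  by apply: sub_all a1 => z /= h; exact: leq_trans h cu.
have [q2 [g2 s2]] := goodw_ext lc cu p1 a1'.
rewrite l1 in g2; move: s1; rewrite /= => s1.
have s2r : size q2 <= r by rewrite s2; move: lw; rewrite ll; lia.
have := lay_le g2 s2r; rewrite s2 ll; lia.
Qed.

Lemma rDe_facts a p : path rDe a p ->
  [/\ lay (last a p) + size p = lay a, all (fun w => lay w < lay a) p,
      uniq (a :: p) & path e a p].
Proof.
move=> h.
have h' : path (fun x y => lay y < lay x) a p by apply: sub_path h => x y /De_lay ->.
split.
- elim: p a h {h'} => [|b p IH] a /=; first by rewrite addn0.
  by case/andP => /De_lay h1 /IH h2; rewrite h1 addnS h2.
- by apply: order_path_min h' => y x z h1 h2; exact: ltn_trans h2 h1.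
- apply: (@map_uniq _ _ lay).
  have h2 : path (fun x y => y < x) (lay a) (map lay p) by rewrite path_map.
  have tr : transitive (fun x y : nat => y < x).
    by move=> y x z h3 h4; exact: ltn_trans h4 h3.
  by apply: (sorted_uniq tr ltnn); exact: h2.
- by apply: sub_path h => x y /and4P [h1 _ _ _]; rewrite esym.
Qed.

Lemma rDe_last_rk a p : path rDe a p -> p != [::] -> rk (last a p) <= rk u.
Proof.
elim: p a => //= b p IH a /andP [/and4P [_ rb _ _] pp] _.
by case: p IH pp => //= d l IH pp; apply: IH pp _.
Qed.

Lemma back_qual c : rk c < rk u -> lay c <= r ->
  exists p, squal e rk r c (last c p) p /\ all (fun w => lay w < lay c) p.
Proof.
move=> cu lc.
have [p [p1 p2 p3 p4]] := back_aux cu lc (leqnn (lay c)) (leqnn (rk c)) (leqnn (lay c)).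
have [f1 f2 f3 f4] := rDe_facts p1.
exists p; split => //.
set w := last c p.
have wc : w != c by apply/eqP => h; move: p3; rewrite -/w h ltnn.
have sp : 0 < size p by case: (p) p2.
split.
  rewrite /qual f4 eqxx f3 wc p3 p4 /= andbT.
  by apply: leq_trans _ lc; rewrite -f1 leq_addl.
case=> q' /and4P [h1 /eqP h2 _ /and4P [h4 _ _ h7]].
set q'' := rev (belast c q').
have pq'' : path e w q''.
  rewrite /q'' -h2 rev_path; rewrite (@eq_path _ _ e) // => x y; exact: esym.
have lq'' : last w q'' = c by rewrite /q'' -h2 last_rev_belast.
have aq : all (fun z => rk z < rk u) (behead (belast w q'')).
  apply: all_bb; rewrite /q'' all_rev; apply/allP => x /mem_belast_split [->//|xb].
  exact: ltn_trans (allP h7 x xb) cu.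
have lw : lay w <= r by apply: leq_trans lc; rewrite -f1 leq_addr.
have rw : rk w <= rk u by exact: rDe_last_rk p1 p2.
have [q2 [g2 s2]] := goodw_ext lw rw pq'' aq.
rewrite lq'' /q'' size_rev size_belast in g2 s2.
rewrite -/w in f1.
have s2r : size q2 <= r by rewrite s2; move: h4 lc sp; rewrite -f1; lia.
have := lay_le g2 s2r; rewrite s2; move: h4 sp; rewrite -f1; lia.
Qed.

Variable k : nat.
Hypothesis hest : forall x, est e rk r x <= k.

Definition ED : {set T * T} := [set ab | De ab.1 ab.2].
Definition Af c : {set T} := [set b | De c b].
Definition Bf c : {set T} := [set b | rk c < rk b].

Lemma edgED : edg ED =2 De.
Proof. by move=> a b; rewrite /edg inE. Qed.

Lemma dsj_sub' (p1 p2 q1 q2 : seq T) : dsj p1 q1 -> {subset p2 <= p1} -> {subset q2 <= q1} ->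
    dsj p2 q2.
Proof.
move=> d s1 s2; apply/hasPn => z /s1 z1; apply/negP => /s2 z2.
by move/hasPn: d => /(_ z z1); rewrite z2.
Qed.

Lemma fwd_family c (I : {set T}) f : lay c <= r -> rk c <= rk u ->
  (forall i, i \in I -> walk ED (Af c) (Bf c) (f i)) ->
  (forall i j, i \in I -> j \in I -> i != j -> dsj (f i) (f j)) ->
  exists g : T -> seq T,
    (forall i, i \in I -> squal e rk r c (last c (g i)) (g i) /\
                          all (fun w => lay c < lay w) (g i)) /\
    (forall i j, i \in I -> j \in I -> i != j -> dsj (g i) (g j)).
Proof.
move=> lc cu hw hd.
have : forall i, exists p, i \in I -> [/\ squal e rk r c (last c p) p,
      all (fun w => lay c < lay w) p & {subset p <= f i}].
  move=> i; case: (boolP (i \in I)) => iI; last by exists [::].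
  move: (hw i iI); case: (f i) => [|a q] //= /and3P [aA pq lB].
  rewrite inE in aA; rewrite inE in lB.
  have pq' : path De a q by rewrite -(eq_path edgED).
  have hB : has (fun z => rk c < rk z) (a :: q).
    by apply/hasP; exists (last a q) => //; exact: mem_last.
  have [q' [p1 p2 p3 p4]] := prefix_first pq' hB.
  have [s1 s2] := fwd_qual lc cu aA p1 p2 p4.
  exists (a :: q') => _; split => //.
  by move=> z; rewrite !inE => /orP [->//|/p3 ->]; rewrite orbT.
case/fin_all_exists => g hg; exists g; split.
  by move=> i iI; have [s1 s2 _] := hg i iI.
move=> i j iI jI ij; have [_ _ s1] := hg i iI; have [_ _ s2] := hg j jI.
exact: dsj_sub' (hd i j iI jI ij) s1 s2.
Qed.

Lemma no_big_fam c n : lay c <= r -> rk c <= rk u ->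
  fam ED (Af c) (Bf c) n -> n + (rk c < rk u) <= k.
Proof.
move=> lc cu [I [f [nI [hw hd]]]].
have [g [hg dg]] := fwd_family lc cu hw hd.
have pw : pairwise (fun p q : seq T => ~~ has (fun x => x \in q) p) (map g (enum I)).
  rewrite pairwise_map; apply: pairwise_uniq; first exact: enum_uniq.
  by move=> x y; rewrite !mem_enum => xI yI xy; exact: dg.
have sq : forall p, p \in map g (enum I) -> squal e rk r c (last c p) p.
  by move=> p /mapP [i]; rewrite mem_enum => iI ->; have [] := hg i iI.
apply: leq_trans (hest c).
case: (boolP (rk c < rk u)) => cu'; last first.
  rewrite addn0; apply: leq_trans nI _; rewrite cardE -(size_map g).
  exact: est_ge.
have [pb [sb lb]] := back_qual cu' lc.
have h1 : forall p, p \in pb :: map g (enum I) -> squal e rk r c (last c p) p.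
  by move=> p; rewrite inE => /orP [/eqP ->|/sq].
have h2 : pairwise (fun p q : seq T => ~~ has (fun x => x \in q) p) (pb :: map g (enum I)).
  rewrite /= pw andbT; apply/allP => q /mapP [i]; rewrite mem_enum => iI ->.
  apply/hasPn => z zb; apply/negP => zg.
  have := allP lb z zb; have := allP (proj2 (hg i iI)) z zg; lia.
have := est_ge h1 h2; rewrite /= size_map -cardE => h.
by rewrite addn1; apply: leq_trans h.
Qed.

Lemma small_sep c n : lay c <= r -> rk c <= rk u -> k < n + (rk c < rk u) ->
  exists X, sep ED (Af c) (Bf c) X /\ #|X| < n.
Proof.
move=> lc cu kn.
case: (classic (forall X, sep ED (Af c) (Bf c) X -> n <= #|X|)) => hc.
  by have := no_big_fam lc cu (menger hc); rewrite leqNgt kn.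
have [X hX] := not_all_ex_not _ _ hc; have [sX nX] := imply_to_and _ _ hX.
by exists X; split => //; rewrite ltnNge; apply/negP.
Qed.

Lemma sep_cover c X v : sep ED (Af c) (Bf c) X -> rk c < rk v -> connect De c v ->
  exists z, [/\ z \in X, lay c < lay z, lay z <= r & connect De z v].
Proof.
move=> sX cv hc.
have vc : c != v by apply/eqP => h; move: cv; rewrite h ltnn.
have [a [q [Dca pq lq]]] := conn_path hc vc.
have hw : walk ED (Af c) (Bf c) (a :: q).
  by rewrite /= !inE Dca lq cv andbT (eq_path edgED).
have pD : path De c (a :: q) by rewrite /= Dca.
have /hasP [z zq zX] := sX _ hw.
exists z; split => //.
- exact: allP (De_path_gt pD) z zq.
- exact: allP (De_path_le pD) z zq.
- by rewrite -lq; exact: path_conn pq zq.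
Qed.

Definition F c := \sum_(v | (rk u < rk v) && connect De c v) (k - 1) ^ (r - lay v).

Lemma union_bound (P Z : pred T) (Q : T -> pred T) (w : T -> nat) :
  (forall v, P v -> exists z, Z z /\ Q z v) ->
  \sum_(v | P v) w v <= \sum_(z | Z z) \sum_(v | Q z v) w v.
Proof.
move=> h.
apply: (@leq_trans (\sum_(v | P v) \sum_(z | Z z && Q z v) w v)).
  apply: leq_sum => v Pv; have [z [Zz Qzv]] := h v Pv.
  by rewrite (bigD1 z) /= ?Zz ?Qzv //; exact: leq_addr.
apply: (@leq_trans (\sum_v \sum_(z | Z z && Q z v) w v)).
  by rewrite [X in _ <= X](bigID P) /=; exact: leq_addr.
by rewrite [X in _ <= X](exchange_big_dep predT).
Qed.

Lemma conn_lay c v : connect De c v -> lay c <= r -> lay v <= r.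
Proof.
case/connectP => p pD -> lc; case: p pD => // a q pD.
exact: (allP (De_path_le pD) _ (mem_last a q)).
Qed.

Lemma lay_neq_u z : 0 < lay z -> z != u.
Proof. by move=> h; apply/eqP => zu; move: h; rewrite zu lay_u. Qed.

Lemma sum_sub (P : pred T) (X : {set T}) C : (forall z, P z -> z \in X) ->
  \sum_(z | P z) C <= #|X| * C.
Proof.
move=> h; rewrite -sum_nat_const big_mkcond [X in _ <= X]big_mkcond /=.
apply: leq_sum => z _; case Pz: (P z); last exact: leq0n.
by rewrite h.
Qed.

Lemma recP m : forall c, r - lay c < m -> c != u -> lay c <= r ->
  F c <= (k - 1) ^ (r - lay c).
Proof.
elim: m => // m IH c hm cu lc.
case: (ltngtP (rk u) (rk c)) => [uc|cu'|eq]; last first.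
- by move/rkinj: eq => eq; rewrite eq eqxx in cu.
- have kk : k < k + (rk c < rk u) by rewrite cu' addn1.
  have [X [sX cX]] := small_sep lc (ltnW cu') kk.
  pose Z z := [&& z \in X, lay c < lay z & lay z <= r].
  apply: (@leq_trans (\sum_(z | Z z) F z)).
    apply: union_bound => v /andP [uv hc].
    have [z [z1 z2 z3 z4]] := sep_cover sX (ltn_trans cu' uv) hc.
    by exists z; rewrite /Z z1 z2 z3 uv z4.
  apply: (@leq_trans (\sum_(z | Z z) (k - 1) ^ (r - lay z))).
    apply: leq_sum => z /and3P [_ z2 z3]; apply: IH => //.
      by move: hm z2 z3; lia.
    by apply: lay_neq_u; move: z2; lia.
  case: (pickP Z) => [z0 Zz0|none]; last by rewrite big_pred0.
  have /and3P [z0X z02 z03] := Zz0.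
  have X0 : 0 < #|X| by apply/card_gt0P; exists z0.
  have k2 : 1 < k by lia.
  have rc : r - lay c = (r - lay c - 1).+1 by lia.
  apply: (@leq_trans (\sum_(z | Z z) (k - 1) ^ (r - lay c - 1))).
    apply: leq_sum => z /and3P [_ z2 z3]; apply: leq_pexp2l; lia.
  apply: leq_trans (sum_sub (X := X) _ _) _.
    by move=> z /and3P [].
  apply: (@leq_trans ((k - 1) * (k - 1) ^ (r - lay c - 1))).
    by apply: leq_mul => //; lia.
  by rewrite -expnS -rc.
- rewrite /F (eq_bigl (fun v => v == c)); first by rewrite big_pred1_eq.
  move=> v; case: (eqVneq v c) => [->|vc]; first by rewrite uc connect0.
  apply/negbTE/negP => /andP [_ hc].
  have cv : c != v by rewrite eq_sym.
  have [a [q [Dca _ _]]] := conn_path hc cv.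
  by move: Dca => /and4P [_ rc _ _]; move: uc rc; lia.
Qed.

Lemma Qbound c : 0 < k -> c != u -> lay c <= r -> F c <= (k - 1) ^ (r - 1).
Proof.
move=> k0 cu lc.
have lc0 : 0 < lay c by rewrite lt0n; apply/eqP => /lay0 h; rewrite h eqxx in cu.
have hP := @recP (r - lay c).+1 c (ltnSn _) cu lc.
case: (ltnP 1 k) => k1.
  by apply: leq_trans hP _; apply: leq_pexp2l; lia.
have k1' : k = 1 by lia.
rewrite k1' subnn in hP *.
case: (leqP r 1) => r1.
  have -> : r - 1 = 0 by lia.
  by apply: leq_trans hP _; case: (r - lay c) => [|n]; rewrite ?expn0 ?exp0n.
have -> : r - 1 = (r - 2).+1 by lia.
rewrite exp0n // leqn0; apply/eqP.
rewrite /F k1' subnn big1 // => v /andP [uv hc].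
have lv := conn_lay hc lc.
case: (ltnP (lay v) r) => lvr; first by rewrite exp0n // subn_gt0.
exfalso.
have vu : v != u by apply/eqP => h; move: uv; rewrite h ltnn.
have [y Dyv] := lay_pred vu lv.
have lyv := De_lay Dyv.
have yu : y != u by apply: lay_neq_u; lia.
have ly : lay y <= r by lia.
have := @recP (r - lay y).+1 y (ltnSn _) yu ly.
rewrite k1' subnn.
have -> : r - lay y = 1 by lia.
rewrite expn1 leqn0 /F (bigD1 v) /=; last by rewrite uv connect1.
have -> : r - lay v = 0 by lia.
by rewrite expn0.
Qed.

Lemma main_bound :
  \sum_(v in reach e rk r u) (k - 1) ^ (r - dv e rk u v) <= k * (k - 1) ^ (r - 1).
Proof.
rewrite (eq_bigr (fun v => (k - 1) ^ (r - lay v))); last first.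
  by move=> v hv; have [_ _ _ ->] := reach_lay hv.
have lu : lay u <= r by rewrite lay_u.
have kk : k < k.+1 + (rk u < rk u) by rewrite ltnn addn0.
have [X [sX cX]] := small_sep lu (leqnn _) kk.
pose Z z := [&& z \in X, z != u & lay z <= r].
apply: (@leq_trans (\sum_(z | Z z) F z)).
  apply: union_bound => v hv.
  have [uv vu lv _] := reach_lay hv.
  have hc := lay_conn (erefl (lay v)) lv.
  have [z [z1 z2 z3 z4]] := sep_cover sX uv hc.
  exists z; split; last by rewrite uv z4.
  rewrite /Z z1 z3 andbT /=.
  by apply: lay_neq_u; rewrite lay_u in z2.
case: (posnP k) => [k0|kpos].
  move: cX; rewrite k0 ltnS leqn0 => /eqP /cards0_eq X0.
  by rewrite big_pred0 // => z; rewrite /Z X0 inE.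
apply: (@leq_trans (\sum_(z | Z z) (k - 1) ^ (r - 1))).
  by apply: leq_sum => z /and3P [_ z2 z3]; exact: Qbound.
apply: leq_trans (sum_sub (X := X) _ _) _.
  by move=> z /and3P [].
by apply: leq_mul => //; rewrite -ltnS.
Qed.

End Lay.

Theorem lemma4p5 (T : finType) (e : rel T) (r k : nat) (rk : T -> nat) :
  symmetric e -> irreflexive e -> 1 <= r ->
  k = adm e r ->
  injective rk ->
  (forall u : T, est e rk r u <= k) ->
  forall u : T,
    \sum_(v in reach e rk r u) (k - 1) ^ (r - dv e rk u v)
      <= k * (k - 1) ^ (r - 1).
Proof.
move=> esym _ _ _ rkinj hest u.
exact: (@main_bound T e rk r u esym rkinj k hest).
Qed.
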